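(* Let $f:F\to F'$ be a morphism of hyperfields, where $F$ is a topological hyperfield. Let $*\in\{s,w\}$ and $M\in\operatorname{Gr}^*(r,F'^n)$. Then the identity maps $$\operatorname{Real}^*_{{}_0F}(M)\to\operatorname{Real}^*_F(M)\to\operatorname{Real}^*_{F_0}(M)$$ are homeomorphisms.
   Context: Hyperfields. A hyperfield $(F,\odot,\boxplus,1,0)$ has the following data and axioms. - $\odot$ is a commutative multiplication and $\boxplus$ is a hyperaddition assigning to each $x,y$ a nonempty subset $x\boxplus y\subseteq F$ (extended to subsets by unions). - $\boxplus$ is commutative and associative, and $x\boxplus 0=\{x\}$. - Each $x$ has a unique $-x$ with $0\in x\boxplus(-x)$, and $x\in y\boxplus z \iff z\in x\boxplus(-y)$. - $(F\setminus\{0\},\odot,1)$ is an abelian group $F^\times$, $0\odot x=0$, and $x\odot(y\boxplus z)=(x\odot y)\boxplus(x\odot z)$. A homomorphism (morphism) $h$ satisfies $h(0)=0$, $h(1)=1$, $h(xy)=h(x)h(y)$ and $h(x\boxplus y)\subseteq h(x)\boxplus h(y)$. Topological hyperfields. A topological hyperfield is a hyperfield with a topology $T$ in which $F\setminus\{0\}$ is open, multiplication is continuous, and inversion on $F^\times$ is continuous. - ${}_0F$ is $F$ with the 0-fine topology: $V\subseteq F$ is open iff $V\setminus\{0\}\in T$. - $F_0$ is $F$ with the 0-coarse topology: the open sets are $F$ and all $U\in T$ with $0\notin U$. Grassmannians. A strong Grassmann–Plücker (GP) function of rank $r$ on $E=\{1,\dots,n\}$ is a function $\varphi:E^r\to F$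 with the following properties. - $\varphi$ is not identically $0$. - $\varphi$ is alternating. - For all $(i_1,\dots,i_{r+1})\in E^{r+1}$ and $(j_1,\dots,j_{r-1})\in E^{r-1}$: $$0\in\boxplus_{k=1}^{r+1}(-1)^k\varphi(i_1,\dots,\widehat{i_k},\dots,i_{r+1})\odot\varphi(i_k,j_1,\dots,j_{r-1}).$$ A weak GP function is a function $\varphi:E^r\to F$ with the following properties. - $\varphi$ is nonzero and alternating. - Its support is the set of bases of a matroid. - The relation holds whenever $|\{i\}\setminus\{j\}|=3$. $\operatorname{Gr}^s(r,F^n)$ and $\operatorname{Gr}^w(r,F^n)$ are the sets of classes of strong, resp. weak, GP functions modulo $\varphi\sim\alpha\varphi$, $\alpha\in F^\times$. For topological $F$ they have the subspace topology of $(F^{E^r}\setminus\{0\})/F^\times$, which carries the product and quotient topologies. Realization spaces. A morphism $f$ induces $\operatorname{Gr}^*(f):[\varphi]\mapsto[f\circ\varphi]$. For $M\in\operatorname{Gr}^*(r,F'^n)$, the realization space $\operatorname{Real}^*_F(M)=\operatorname{Gr}^*(f)^{-1}(M)\subseteq\operatorname{Gr}^*(r,F^n)$ has the subspace topology; the subscript indicates which topology on $F$ is used. *)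

(* Defs.v *)
From HB Require Import structures.
From mathcomp Require Import all_boot fingroup perm.
Set Implicit Arguments.
Unset Strict Implicit.
Unset Printing Implicit Defensive.

(* Hyperfields.  [hadd x y z] means  z ∈ x ⊞ y.                        *)
Record hyperfield := HyperField {
  hcar :> Type;
  hzero : hcar;
  hone : hcar;
  hmul : hcar -> hcar -> hcar;
  hadd : hcar -> hcar -> hcar -> Prop;
  hneg : hcar -> hcar;
  hinv : hcar -> hcar;
  hadd_nonempty : forall x y, exists z, hadd x y z;
  hadd_comm : forall x y z, hadd x y z -> hadd y x z;
  hadd_assoc : forall x y z t,
    (exists w, hadd x y w /\ hadd w z t) <-> (exists w, hadd y z w /\ hadd x w t);
  hadd_zero : forall x z, hadd x hzero z <-> z = x;
  hneg_spec : forall x, hadd x (hneg x) hzero;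
  hneg_unique : forall x y, hadd x y hzero -> y = hneg x;
  hadd_rev : forall x y z, hadd y z x <-> hadd x (hneg y) z;
  hone_neq0 : hone <> hzero;
  hmul_comm : forall x y, hmul x y = hmul y x;
  hmul_assoc : forall x y z, hmul x (hmul y z) = hmul (hmul x y) z;
  hmul_one : forall x, hmul hone x = x;
  hmul_closed : forall x y, x <> hzero -> y <> hzero -> hmul x y <> hzero;
  hmul_inv : forall x, x <> hzero -> hmul x (hinv x) = hone;
  hmul_zero : forall x, hmul hzero x = hzero;
  hdistr : forall x y z t,
    hadd (hmul x y) (hmul x z) t <-> exists u, hadd y z u /\ t = hmul x u
}.

Arguments hzero {h}.
Arguments hone {h}.

Record hmorph (F F' : hyperfield) := HMorph {
  hm :> F -> F';
  hm_zero : hm hzero = hzero;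
  hm_one : hm hone = hone;
  hm_mul : forall x y, hm (hmul x y) = hmul (hm x) (hm y);
  hm_add : forall x y z, hadd x y z -> hadd (hm x) (hm y) (hm z)
}.

Definition topology (X : Type) := (X -> Prop) -> Prop.

Definition is_topology (X : Type) (T : topology X) : Prop :=
  T (fun _ => True) /\
  (forall S : (X -> Prop) -> Prop, (forall U, S U -> T U) ->
     T (fun x => exists U, S U /\ U x)) /\
  (forall U V, T U -> T V -> T (fun x => U x /\ V x)).

Definition sub_top (X : Type) (T : topology X) (P : X -> Prop) : topology {x | P x} :=
  fun U => exists V, T V /\ forall x : {x | P x}, U x <-> V (proj1_sig x).

Definition quot_top (X Y : Type) (T : topology X) (q : X -> Y) : topology Y :=
  fun U => T (fun x => U (q x)).

Definition prodfun_top (I : finType) (X : Type) (T : topology X) : topology (I -> X) :=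
  fun W => forall f, W f -> exists V : I -> X -> Prop,
     (forall i, T (V i)) /\ (forall i, V i (f i)) /\
     (forall g, (forall i, V i (g i)) -> W g).

Definition prod2_top (X Y : Type) (TX : topology X) (TY : topology Y) : topology (X * Y) :=
  fun W => forall p, W p -> exists U V, TX U /\ TY V /\ U p.1 /\ V p.2 /\
     (forall a b, U a -> V b -> W (a, b)).

Arguments sub_top {X} T P.
Arguments quot_top {X Y} T q.
Arguments prodfun_top {I X} T.
Arguments prod2_top {X Y} TX TY.

Definition continuous (X Y : Type) (TX : topology X) (TY : topology Y) (h : X -> Y) :=
  forall U, TY U -> TX (fun x => U (h x)).

Definition homeomorphism (X Y : Type) (TX : topology X) (TY : topology Y) (h : X -> Y) :=
  exists g : Y -> X, (forall x, g (h x) = x) /\ (forall y, h (g y) = y) /\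
    continuous TX TY h /\ continuous TY TX g.

Arguments continuous {X Y} TX TY h.
Arguments homeomorphism {X Y} TX TY h.
Arguments is_topology {X} T.

Definition top_hyperfield (F : hyperfield) (T : topology F) : Prop :=
  is_topology T /\
  T (fun x => x <> hzero) /\
  continuous (prod2_top T T) T (fun p => hmul p.1 p.2) /\
  (* inversion F^x -> F^x continuous for the subspace topology on F^x *)
  (forall U, T U -> exists V, T V /\
     forall x : F, x <> hzero -> (U (hinv x) /\ hinv x <> hzero <-> V x)).

Definition fine_top (F : hyperfield) (T : topology F) : topology F :=
  fun V => T (fun x => V x /\ x <> hzero).

Definition coarse_top (F : hyperfield) (T : topology F) : topology F :=
  fun U => (forall x, U x) \/ (T U /\ ~ U hzero).

(* E = 'I_n ; E^r represented by {ffun 'I_r -> 'I_n}                   *)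
Definition idx (r n : nat) := {ffun 'I_r -> 'I_n}.

Section GP.
Variable F : hyperfield.

Fixpoint hpow (x : F) (k : nat) : F :=
  match k with 0 => hone | k.+1 => hmul x (hpow x k) end.

Fixpoint hsum (l : seq F) (t : F) : Prop :=
  match l with
  | [::] => t = hzero
  | a :: l' => exists s, hsum l' s /\ hadd a s t
  end.

Variables r n : nat.

Definition nonzero_fun (phi : idx r n -> F) := exists x, phi x <> hzero.

Definition alternating (phi : idx r n -> F) :=
  (forall (x : idx r n) (a b : 'I_r), a != b -> x a = x b -> phi x = hzero) /\
  (forall (x : idx r n) (s : 'S_r),
     phi [ffun m => x (s m)] = hmul (hpow (hneg hone) (odd_perm s)) (phi x)).

(* (i_1, ..., \hat{i_k}, ..., i_{r+1}) *)
Definition drop_at (i : idx r.+1 n) (k : 'I_r.+1) : idx r n :=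
  [ffun m => i (lift k m)].

(* (a, j_1, ..., j_{r-1}) *)
Definition cons_at (a : 'I_n) (j : idx r.-1 n) : idx r n :=
  [ffun m : 'I_r => match val m with
                   | 0 => a
                   | p.+1 => match (insub p : option 'I_r.-1) with
                             | Some q => j q
                             | None => a
                             end
                   end].

(* 0 ∈ ⊞_{k=1}^{r+1} (-1)^k φ(i without i_k) φ(i_k, j)  (k is 0-based here) *)
Definition GP_relation (phi : idx r n -> F) (i : idx r.+1 n) (j : idx r.-1 n) :=
  hsum [seq hmul (hmul (hpow (hneg hone) (val k).+1) (phi (drop_at i k)))
                 (phi (cons_at (i k) j)) | k : 'I_r.+1 <- enum 'I_r.+1] hzero.

Definition strong_GP (phi : idx r n -> F) :=
  nonzero_fun phi /\ alternating phi /\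
  (0 < r -> forall i j, GP_relation phi i j).

Definition matroid_bases (B : {set 'I_n} -> Prop) :=
  (exists b, B b) /\
  (forall B1 B2 x, B B1 -> B B2 -> x \in B1 :\: B2 ->
     exists2 y, y \in B2 :\: B1 & B (y |: (B1 :\ x))).

Definition support_sets (phi : idx r n -> F) (b : {set 'I_n}) :=
  exists x : idx r n, phi x <> hzero /\ b = [set x k | k : 'I_r].

Definition weak_GP (phi : idx r n -> F) :=
  nonzero_fun phi /\ alternating phi /\
  matroid_bases (support_sets phi) /\
  (0 < r -> forall (i : idx r.+1 n) (j : idx r.-1 n),
     #|[set i k | k : 'I_r.+1] :\: [set j k | k : 'I_r.-1]| = 3 ->
     GP_relation phi i j).

End GP.

Inductive gp_kind := Strong | Weak.

Definition is_GP (kind : gp_kind) (F : hyperfield) (r n : nat) (phi : idx r n -> F) :=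
  match kind with Strong => strong_GP phi | Weak => weak_GP phi end.

Section Grass.
Variables (F : hyperfield) (r n : nat).

Definition cls (phi : idx r n -> F) : (idx r n -> F) -> Prop :=
  fun psi => exists alpha : F, alpha <> hzero /\ forall x, psi x = hmul alpha (phi x).

Definition NZ := {phi : idx r n -> F | nonzero_fun phi}.

Definition QT := {c : (idx r n -> F) -> Prop | exists phi : NZ, c = cls (proj1_sig phi)}.

Definition qmap (phi : NZ) : QT :=
  exist _ (cls (proj1_sig phi)) (ex_intro _ phi erefl).

Definition Q_top (T : topology F) : topology QT :=
  quot_top (sub_top (@prodfun_top (idx r n) F T) (@nonzero_fun F r n)) qmap.

Definition GrP (kind : gp_kind) (c : QT) :=
  exists phi, is_GP kind phi /\ proj1_sig c = cls phi.

Definition GrT (kind : gp_kind) := {c : QT | GrP kind c}.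

Definition Gr_top (kind : gp_kind) (T : topology F) : topology (GrT kind) :=
  sub_top (Q_top T) (GrP kind).

End Grass.

Section Real.
Variables (F F' : hyperfield) (f : hmorph F F') (kind : gp_kind) (r n : nat)
          (M : GrT F' r n kind).

(* c ∈ Gr^*(f)^{-1}(M),  Gr^*(f)[phi] = [f ∘ phi] *)
Definition RealP (c : GrT F r n kind) :=
  exists phi : idx r n -> F,
    proj1_sig (proj1_sig c) = cls phi /\
    proj1_sig (proj1_sig M) = cls (fun x => f (phi x)).

Definition RealT := {c : GrT F r n kind | RealP c}.

Definition Real_top (T : topology F) : topology RealT :=
  sub_top (@Gr_top F r n kind T) RealP.

End Real.

Arguments RealT {F F'} f {kind r n} M.
Arguments Real_top {F F'} f {kind r n} M T.
Arguments RealP {F F'} f {kind r n} M c.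

(* Main.v *)
Require Import Defs.
From HB Require Import structures.
From mathcomp Require Import all_boot fingroup perm.
From Stdlib Require Import Classical ClassicalDescription FunctionalExtensionality PropExtensionality ProofIrrelevance.
Set Implicit Arguments.
Unset Strict Implicit.

Lemma hmul_x1 (F : hyperfield) (x : F) : hmul x hone = x.
Proof. by rewrite hmul_comm hmul_one. Qed.

Lemma hmul_x0 (F : hyperfield) (x : F) : hmul x hzero = hzero.
Proof. by rewrite hmul_comm hmul_zero. Qed.

Lemma hinv_neq0 (F : hyperfield) (x : F) : x <> hzero -> hinv x <> hzero.
Proof. move=> Hx E; have := hmul_inv Hx; rewrite E hmul_x0 => H; exact: hone_neq0 (esym H). Qed.

Lemma hm_nz (F F' : hyperfield) (f : hmorph F F') (x : F) : f x = hzero -> x = hzero.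
Proof.
move=> Hf; apply: NNPP => Hx.
have := hm_mul f x (hinv x); rewrite hmul_inv // hm_one Hf hmul_zero.
exact: hone_neq0.
Qed.

Lemma cls_self (F : hyperfield) r n (phi : idx r n -> F) : cls phi phi.
Proof. exists hone; split; [exact: hone_neq0| by move=> x; rewrite hmul_one]. Qed.

Lemma cls_eq_scale (F : hyperfield) r n (a b : idx r n -> F) :
  cls a = cls b -> exists al, al <> hzero /\ forall x, b x = hmul al (a x).
Proof. move=> E; have := cls_self b; rewrite -E; by []. Qed.

Lemma cls_scale (F : hyperfield) r n (phi : idx r n -> F) al : al <> hzero ->
  cls (fun x => hmul al (phi x)) = cls phi.
Proof.
move=> Hal; apply: functional_extensionality => psi; apply: propositional_extensionality.
split.
- move=> [b [Hb E]]; exists (hmul b al); split; first exact: hmul_closed.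
  by move=> x; rewrite E hmul_assoc.
- move=> [b [Hb E]]; exists (hmul b (hinv al)); split.
    exact: hmul_closed _ _ Hb (hinv_neq0 Hal).
  move=> x; rewrite E hmul_assoc -(hmul_assoc b) (hmul_comm (hinv al)) hmul_inv //.
  by rewrite hmul_x1.
Qed.

Lemma q_eq (F : hyperfield) r n (q : QT F r n) (x : NZ F r n) :
  proj1_sig q = cls (proj1_sig x) -> q = qmap x.
Proof.
case: q => c pc /= E; subst c; rewrite /qmap; f_equal; apply: proof_irrelevance.
Qed.

Definition rho (F : hyperfield) r n (Z : idx r n -> Prop) (g : idx r n -> F) : idx r n -> F :=
  fun i => if excluded_middle_informative (Z i) then hzero else g i.

Lemma mono (F F' : hyperfield) (f : hmorph F F') kind r n (M : GrT F' r n kind)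
  (T1 T2 : topology F) : (forall V, T2 V -> T1 V) ->
  forall U, Real_top f M T2 U -> Real_top f M T1 U.
Proof.
move=> H U [V [[W [[O [HO HWO]] HVW]] HUV]].
exists V; split; last exact HUV.
exists W; split; last exact HVW.
exists O; split; last exact HWO.
move=> g Og; have [Vi [h1 [h2 h3]]] := HO g Og.
by exists Vi; split; [move=> i; apply: H; apply: h1|split].
Qed.
Lemma O_scale (F : hyperfield) r n (W : QT F r n -> Prop) (O : (idx r n -> F) -> Prop)
  (HWO : forall x : NZ F r n, W (qmap x) <-> O (proj1_sig x))
  (h : idx r n -> F) al : nonzero_fun h -> al <> hzero ->
  O h <-> O (fun x => hmul al (h x)).
Proof.
move=> nzh Hal.
have nz' : nonzero_fun (fun x => hmul al (h x)).
  by case: nzh => x Hx; exists x; apply: hmul_closed.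
have E : qmap (exist _ h nzh) = qmap (exist _ _ nz').
  by apply: q_eq => /=; rewrite cls_scale.
split=> H.
- apply/(HWO (exist _ _ nz')); rewrite -E; exact/(HWO (exist _ _ nzh)).
- apply/(HWO (exist _ _ nzh)); rewrite E; exact/(HWO (exist _ _ nz')).
Qed.

Lemma rho_scale (F : hyperfield) r n Z (g : idx r n -> F) al :
  rho Z (fun x => hmul al (g x)) = (fun x => hmul al (rho Z g x)).
Proof.
apply: functional_extensionality => i; rewrite /rho.
by destruct (excluded_middle_informative (Z i)) => //; rewrite hmul_x0.
Qed.

Lemma core (F F' : hyperfield) (f : hmorph F F') kind r n (M : GrT F' r n kind)
  (T1 T2 : topology F) : T2 (fun _ => True) ->
  (forall V, T1 V -> T2 (fun y => V y /\ y <> hzero)) ->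
  forall U, Real_top f M T1 U -> Real_top f M T2 U.
Proof.
move=> Htop Hint U [V [[W [[O [HO HWO]] HVW]] HUV]].
destruct M as [[cM HcM0] HM]; have [[phiM nzM] HcM] := HcM0.
simpl in HcM.
pose Z := fun i => phiM i = hzero.
have [i0 Hi0] := nzM.
pose offZ := fun g : idx r n -> F => forall i, ~ Z i -> g i <> hzero.
have rho_nz : forall g, offZ g -> nonzero_fun (rho Z g).
  move=> g Hg; exists i0; rewrite /rho.
  destruct (excluded_middle_informative (Z i0)) as [H|H]; [case: (Hi0 H)| apply: Hg => //].
pose W2 := fun q : QT F r n => exists psi, proj1_sig q = cls psi /\ offZ psi /\ O (rho Z psi).
pose O2 := fun g : idx r n -> F => offZ g /\ O (rho Z g).
have HQ : Q_top T2 W2.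
  exists O2; split.
  - move=> g [offg Og].
    have [Vi [h1 [h2 h3]]] := HO _ Og.
    exists (fun i y => ~ Z i -> Vi i y /\ y <> hzero); split; [|split].
    + move=> i; case: (classic (Z i)) => Hz.
      * have -> : (fun y => ~ Z i -> Vi i y /\ y <> hzero) = (fun _ => True) by
          apply: functional_extensionality => y; apply: propositional_extensionality.
        exact: Htop.
      * have -> : (fun y => ~ Z i -> Vi i y /\ y <> hzero) = (fun y => Vi i y /\ y <> hzero) by
          apply: functional_extensionality => y; apply: propositional_extensionality; tauto.
        exact: Hint.
    + move=> i Hz; split; last exact: offg.
      have := h2 i; rewrite /rho; by destruct (excluded_middle_informative (Z i)).
    + move=> g' Hg'; split; first by move=> i Hz; case: (Hg' i Hz).
      apply: h3 => i; have := h2 i; rewrite /rho.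
      destruct (excluded_middle_informative (Z i)) as [Hz|Hz] => // _; by case: (Hg' i Hz).
  - move=> [x nzx] /=; split.
    + move=> [psi [E [offp Op]]].
      have [al [Hal Ex]] := cls_eq_scale (esym E).
      have -> : x = (fun i => hmul al (psi i)) by apply: functional_extensionality.
      split; first by move=> i Hz; apply: hmul_closed => //; apply: offp.
      rewrite rho_scale -(O_scale HWO (rho_nz _ offp) Hal); exact Op.
    + move=> [offx Ox]; exists x; split=> //.
exists (fun g : GrT F r n kind => W2 (proj1_sig g)); split.
  by exists W2; split.
move=> [[q Gq] Rq] /=.
rewrite HUV HVW /=.
have [phi [Eq EM]] := Rq; simpl in Eq, EM.
have [al [Hal Ef]] : exists al, al <> hzero /\ forall x, f (phi x) = hmul al (phiM x).
  by apply: cls_eq_scale; rewrite -HcM.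
have pat : forall i, phi i = hzero <-> Z i.
  move=> i; rewrite /Z; split.
  - move=> H; apply: NNPP => H'; have := Ef i; rewrite H hm_zero => E.
    exact: (hmul_closed Hal H') (esym E).
  - move=> H; apply: (@hm_nz _ _ f); rewrite Ef H hmul_x0 //.
have nzphi : nonzero_fun phi by exists i0 => /(pat i0).
have -> : q = qmap (exist _ phi nzphi) by apply: q_eq.
have rphi : rho Z phi = phi.
  apply: functional_extensionality => i; rewrite /rho.
  destruct (excluded_middle_informative (Z i)) as [H|H] => //; exact/esym/(pat i).
split.
- move=> /(HWO (exist _ phi nzphi)) /= Op; exists phi; split=> //; split.
    by move=> i Hz /(pat i).
  by rewrite rphi.
- move=> [psi [E [offp Op]]]; apply/(HWO (exist _ phi nzphi)) => /=.
  have [be [Hbe Ex]] := cls_eq_scale E.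
  have Epsi : psi = (fun i => hmul be (phi i)) by apply: functional_extensionality.
  rewrite Epsi rho_scale rphi in Op.
  by apply/(O_scale HWO nzphi Hbe).
Qed.

Theorem corollary5p2 (F F' : hyperfield) (f : hmorph F F') (T : topology F)
  (HT : top_hyperfield T) (kind : gp_kind) (r n : nat) (M : GrT F' r n kind) :
  homeomorphism (Real_top f M (fine_top T)) (Real_top f M T) (fun c => c) /\
  homeomorphism (Real_top f M T) (Real_top f M (coarse_top T)) (fun c => c).
Proof.
case: HT => [[Htrue [_ Hcap]] [Hnz _]].
have TsubFine : forall V, T V -> fine_top T V.
  by move=> V HV; apply: Hcap.
have CoarseSubT : forall V, coarse_top T V -> T V.
  move=> V [H|[H _]] //.
  have -> : V = (fun _ => True) by
    apply: functional_extensionality => y; apply: propositional_extensionality.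
  exact Htrue.
split; exists (fun c => c); (split; [by []|split; [by []|split]]).
- move=> U HU; exact: (mono TsubFine HU).
- move=> U HU; apply: (core Htrue _ HU) => V HV; exact HV.
- move=> U HU; exact: (mono CoarseSubT HU).
- move=> U HU; apply: (core _ _ HU); first by left.
  move=> V HV; right; split; last by case.
  exact: Hcap.
Qed.
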